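(* There exists a comeager set $\mathcal S\subseteq\mathcal G$ such that for every $G\in\mathcal S$ and every $H\in\mathcal G$, the groups $\overline G$ and $\overline H$ are elementarily equivalent (as structures in the first-order language of group theory) if and only if $H\in\mathcal S$.
   Context: Let $\mathbb N=\{1,2,3,\dots\}$. Equip $\mathbb N^{\mathbb N\times\mathbb N}$ with the product topology of the discrete topology on $\mathbb N$. Let $\mathcal G$ be the subspace consisting of those $A\in\mathbb N^{\mathbb N\times\mathbb N}$ that are the multiplication table of a group on the underlying set $\mathbb N$ whose identity element is $1$. For $G\in\mathcal G$, $\overline G$ denotes the group on $\mathbb N$ with multiplication table $G$. The language of group theory has a binary function symbol (multiplication) and a constant symbol $1$; two structures are elementarily equivalent if they satisfy the same first-order sentences of this language. *)

(* Defs.v *)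
(* Encoding: the underlying set N = {1,2,3,...} is represented by
   Rocq's nat = {0,1,2,...} via n |-> n-1 (a bijection, hence a homeomorphism of
   N^(N x N) with the product of discrete topologies); the identity element 1
   becomes 0. *)
From Stdlib Require Import List Arith.
Import ListNotations.

Definition table := nat -> nat -> nat.

Definition is_group_table (A : table) : Prop :=
  (forall x y z, A (A x y) z = A x (A y z)) /\
  (forall x, A 0 x = x /\ A x 0 = x) /\
  (forall x, exists y, A x y = 0 /\ A y x = 0).

Definition Gspace (A : table) : Prop := is_group_table A.

(** Basic neighbourhoods of the product topology: agreement on a finite square. *)
Definition agree (n : nat) (A B : table) : Prop :=
  forall i j, i < n -> j < n -> A i j = B i j.

Definition rel_open (U : table -> Prop) : Prop :=
  forall A, Gspace A -> U A ->
    exists n, forall B, Gspace B -> agree n A B -> U B.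

Definition rel_closure (X : table -> Prop) (A : table) : Prop :=
  Gspace A /\ forall n, exists B, Gspace B /\ X B /\ agree n A B.

Definition rel_nowhere_dense (X : table -> Prop) : Prop :=
  ~ exists U : table -> Prop,
      rel_open U /\ (exists A, Gspace A /\ U A) /\
      (forall A, Gspace A -> U A -> rel_closure X A).

Definition rel_meager (X : table -> Prop) : Prop :=
  exists N : nat -> (table -> Prop),
    (forall k, rel_nowhere_dense (N k)) /\
    (forall A, Gspace A -> X A -> exists k, N k A).

Definition comeager_in_G (S : table -> Prop) : Prop :=
  (forall A, S A -> Gspace A) /\ rel_meager (fun A => Gspace A /\ ~ S A).

Inductive term : Type :=
| TVar : nat -> term
| TOne : term
| TMul : term -> term -> term.

Inductive formula : Type :=
| FEq : term -> term -> formula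
| FFalse : formula
| FNot : formula -> formula
| FAnd : formula -> formula -> formula
| FOr : formula -> formula -> formula
| FImp : formula -> formula -> formula
| FAll : nat -> formula -> formula
| FEx : nat -> formula -> formula.

Fixpoint term_fv (t : term) : list nat :=
  match t with
  | TVar n => [n]
  | TOne => []
  | TMul a b => term_fv a ++ term_fv b
  end.

Fixpoint fv (f : formula) : list nat :=
  match f with
  | FEq a b => term_fv a ++ term_fv b
  | FFalse => []
  | FNot g => fv g
  | FAnd g h | FOr g h | FImp g h => fv g ++ fv h
  | FAll n g | FEx n g => filter (fun m => negb (Nat.eqb m n)) (fv g)
  end.

Definition sentence (f : formula) : Prop := fv f = [].

Definition upd (e : nat -> nat) (n v : nat) : nat -> nat :=
  fun m => if Nat.eqb m n then v else e m.

Fixpoint eval (A : table) (e : nat -> nat) (t : term) : nat :=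
  match t with
  | TVar n => e n
  | TOne => 0
  | TMul a b => A (eval A e a) (eval A e b)
  end.

Fixpoint sat (A : table) (e : nat -> nat) (f : formula) : Prop :=
  match f with
  | FEq a b => eval A e a = eval A e b
  | FFalse => False
  | FNot g => ~ sat A e g
  | FAnd g h => sat A e g /\ sat A e h
  | FOr g h => sat A e g \/ sat A e h
  | FImp g h => sat A e g -> sat A e h
  | FAll n g => forall v, sat A (upd e n v) g
  | FEx n g => exists v, sat A (upd e n v) g
  end.

Definition elem_equiv (A B : table) : Prop :=
  forall f, sentence f -> (sat A (fun _ => 0) f <-> sat B (fun _ => 0) f).

(* Main.v *)
Require Import Defs.
From Stdlib Require Import List Arith Lia Cantor Classical IndefiniteDescription FunctionalExtensionality.

Lemma agree_sym n A B : agree n A B -> agree n B A.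
Proof. intros H i j Hi Hj. symmetry. apply H; auto. Qed.
Lemma agree_trans n A B C : agree n A B -> agree n B C -> agree n A C.
Proof. intros H1 H2 i j Hi Hj. rewrite H1 by auto. apply H2; auto. Qed.
Lemma agree_mono n m A B : n <= m -> agree m A B -> agree n A B.
Proof. intros Hnm H i j Hi Hj. apply H; lia. Qed.

Definition Bas (A : table) (n : nat) : table -> Prop :=
  fun C => Gspace C /\ agree n A C.
Definition subs (X Y : table -> Prop) := forall C, X C -> Y C.

Lemma Bas_sub A n B k : n <= k -> agree n A B -> subs (Bas B k) (Bas A n).
Proof. intros Hnk H C [G HC]. split; auto. eapply agree_trans; eauto. eapply agree_mono; eauto. Qed.

Definition ND (N : table -> Prop) : Prop :=
  forall A n, Gspace A -> exists B k, Gspace B /\ subs (Bas B k) (Bas A n) /\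
     forall C, Bas B k C -> ~ N C.

Lemma ND_rel N : rel_nowhere_dense N -> ND N.
Proof.
  intros H A n GA. apply NNPP; intro Hno. apply H.
  exists (Bas A n). split; [|split].
  - intros C GC [_ HC]. exists n. intros B GB HB. split; auto. eapply agree_trans; eauto.
  - exists A. split; auto. split; auto. intros i j _ _; auto.
  - intros C GC [_ HC]. split; auto. intro m. apply NNPP; intro Hm.
    apply Hno. exists C, (max m n). split; auto. split.
    + apply Bas_sub; [lia|auto].
    + intros D [GD HD] ND0. apply Hm. exists D. split; auto. split; auto.
      eapply agree_mono; [|exact HD]. lia.
Qed.

Lemma rel_ND N : ND N -> rel_nowhere_dense N.
Proof.
  intros H [U [HU [[A [GA UA]] Hcl]]].
  destruct (HU A GA UA) as [n Hn].
  destruct (H A n GA) as [B [k [GB [Hsub Hav]]]].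
  assert (UB : U B). { destruct (Hsub B) as [_ HB]. split; auto. intros i j _ _; auto. apply Hn; auto. }
  destruct (Hcl B GB UB) as [_ Hc]. destruct (Hc k) as [D [GD [ND0 HD]]].
  eapply Hav; [split; eauto|eauto].
Qed.

Lemma ND_empty : ND (fun _ => False).
Proof. intros A n GA. exists A, n. split; auto. split; [intros C HC; auto|]. auto. Qed.

Lemma meager_mono (Y Z : table -> Prop) :
  (forall A, Gspace A -> Y A -> Z A) -> rel_meager Z -> rel_meager Y.
Proof. intros H [N [HN Hc]]. exists N. split; auto. Qed.

Lemma meager_empty (Y : table -> Prop) : (forall A, Gspace A -> ~ Y A) -> rel_meager Y.
Proof.
  intro H. exists (fun _ _ => False). split.
  - intros _. apply rel_ND, ND_empty.
  - intros A GA YA. exfalso. eapply H; eauto.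
Qed.

Lemma choice_fun {X Y : Type} (R : X -> Y -> Prop) :
  (forall x, exists y, R x y) -> exists f : X -> Y, forall x, R x (f x).
Proof.
  intro H. exists (fun x => proj1_sig (constructive_indefinite_description _ (H x))).
  intro x. exact (proj2_sig (constructive_indefinite_description _ (H x))).
Qed.

Lemma meager_cunion (Y : nat -> table -> Prop) :
  (forall i, rel_meager (Y i)) -> rel_meager (fun A => exists i, Y i A).
Proof.
  intro H. destruct (choice_fun (fun i N => (forall k, rel_nowhere_dense (N k)) /\
    (forall A, Gspace A -> Y i A -> exists k, N k A)) H) as [F HF].
  exists (fun c => F (fst (of_nat c)) (snd (of_nat c))). split.
  - intro c. apply (proj1 (HF _)).
  - intros A GA [i Yi]. destruct (proj2 (HF i) A GA Yi) as [k Hk].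
    exists (to_nat (i, k)). rewrite cancel_of_to. exact Hk.
Qed.

Lemma meager_union (Y Z : table -> Prop) :
  rel_meager Y -> rel_meager Z -> rel_meager (fun A => Y A \/ Z A).
Proof.
  intros HY HZ. eapply meager_mono; [|apply (meager_cunion (fun i => if i =? 0 then Y else Z))].
  - intros A _ [H|H]; [exists 0|exists 1]; exact H.
  - intros [|i]; simpl; auto.
Qed.

Lemma meager_ND N : ND N -> rel_meager N.
Proof. intro H. exists (fun _ => N). split; [intros; apply rel_ND; auto|]. intros A _ HA. exists 0. auto. Qed.

Definition stepR (N : nat -> table -> Prop) (p : nat * (table * nat)) (q : table * nat) : Prop :=
  let k := fst p in let A := fst (snd p) in let n := snd (snd p) in
  let A' := fst q in let n' := snd q in
  Gspace A -> Gspace A' /\ n < n' /\ agree n A A' /\ (forall C, Bas A' n' C -> ~ N k C) /\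
   exists y, y < n' /\ k < n' /\ A' k y = 0 /\ A' y k = 0.

Lemma step_ex N : (forall k, ND (N k)) -> forall p, exists q, stepR N p q.
Proof.
  intros HN [k [A n]]. destruct (classic (Gspace A)) as [GA|nGA].
  - destruct (HN k A n GA) as [B [m [GB [Hs Hav]]]].
    assert (HAB : agree n A B). { destruct (Hs B) as [_ H]; [split; auto; intros i j _ _; auto|exact H]. }
    pose proof GB as [Ha [Hid Hinv]]. destruct (Hinv k) as [y [Hy1 Hy2]].
    exists (B, max m (max (S n) (max (S k) (S y)))). unfold stepR; simpl. intros _.
    split; [exact GB|]. split; [lia|]. split; auto. split.
    + intros C [GC HC]. apply Hav. split; auto. eapply agree_mono; [|exact HC]. lia.
    + exists y. repeat split; auto; lia.
  - exists (A, n). unfold stepR; simpl. intro H; contradiction.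
Qed.

Section Baire.
Variable N : nat -> table -> Prop.
Variable HN : forall k, ND (N k).
Variable A0 : table.
Variable n0 : nat.
Variable G0 : Gspace A0.

Let F : nat * (table * nat) -> table * nat :=
  fun p => proj1_sig (constructive_indefinite_description _ (step_ex N HN p)).
Let HF p : stepR N p (F p) := proj2_sig (constructive_indefinite_description _ (step_ex N HN p)).

Fixpoint sq (j : nat) : table * nat :=
  match j with 0 => (A0, n0) | S j' => F (j', sq j') end.

Lemma sq_G j : Gspace (fst (sq j)).
Proof. induction j; simpl; auto. destruct (HF (j, sq j) IHj) as [H _]. exact H. Qed.

Lemma sq_step j : snd (sq j) < snd (sq (S j)) /\ agree (snd (sq j)) (fst (sq j)) (fst (sq (S j))) /\
  (forall C, Bas (fst (sq (S j))) (snd (sq (S j))) C -> ~ N j C) /\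
  exists y, y < snd (sq (S j)) /\ j < snd (sq (S j)) /\ fst (sq (S j)) j y = 0 /\ fst (sq (S j)) y j = 0.
Proof. simpl. destruct (HF (j, sq j) (sq_G j)) as [_ H]. exact H. Qed.

Lemma sq_ge j : j <= snd (sq j).
Proof. induction j; [lia|]. destruct (sq_step j) as [H _]. lia. Qed.

Lemma sq_nmono i j : i <= j -> snd (sq i) <= snd (sq j).
Proof. induction 1; auto. destruct (sq_step m) as [H1 _]. lia. Qed.

Lemma sq_mono i j : i <= j -> agree (snd (sq i)) (fst (sq i)) (fst (sq j)).
Proof.
  induction 1. - intros a b _ _; auto.
  - eapply agree_trans; [exact IHle|]. eapply agree_mono; [apply sq_nmono; exact H|].
    apply (proj1 (proj2 (sq_step m))).
Qed.

Definition lim : table := fun x y => fst (sq (S (max x y))) x y.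

Lemma lim_agree j : agree (snd (sq j)) (fst (sq j)) lim.
Proof.
  intros x y Hx Hy. unfold lim. destruct (le_lt_dec (S (max x y)) j) as [Hle|Hlt].
  - symmetry. apply (sq_mono _ _ Hle); pose proof (sq_ge (S (max x y))); lia.
  - apply (sq_mono j _ (Nat.lt_le_incl _ _ Hlt)); auto.
Qed.

Lemma lim_at j x y : x < snd (sq j) -> y < snd (sq j) -> lim x y = fst (sq j) x y.
Proof. intros. symmetry. apply lim_agree; auto. Qed.

Lemma lim_G : Gspace lim.
Proof.
  split; [|split].
  - intros x y z. set (j := S (x + y + z + lim x y + lim y z)).
    pose proof (sq_ge j). pose proof (sq_G j) as [Ha _].
    rewrite (lim_at j x y) by lia. rewrite (lim_at j y z) by lia.
    assert (E1: lim x y = fst (sq j) x y) by (apply lim_at; lia).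
    assert (E2: lim y z = fst (sq j) y z) by (apply lim_at; lia).
    rewrite (lim_at j (fst (sq j) x y) z) by lia. rewrite (lim_at j x (fst (sq j) y z)) by lia.
    apply Ha.
  - intro x. pose proof (sq_ge (S x)). pose proof (sq_G (S x)) as [_ [Hid _]].
    rewrite !(lim_at (S x)) by lia. apply Hid.
  - intro x. destruct (sq_step x) as [_ [_ [_ [y [Hy [Hx [E1 E2]]]]]]].
    exists y. rewrite !(lim_at (S x)) by lia. auto.
Qed.

Lemma baire_point : Bas A0 n0 lim /\ forall k, ~ N k lim.
Proof.
  split.
  - split; [apply lim_G|]. apply (lim_agree 0).
  - intros k Hk. destruct (sq_step k) as [_ [_ [Hav _]]]. apply (Hav lim); auto.
    split; [apply lim_G|]. apply lim_agree.
Qed.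
End Baire.

Lemma baire (N : nat -> table -> Prop) : (forall k, ND (N k)) -> forall A n, Gspace A -> exists C, Bas A n C /\ forall k, ~ N k C.
Proof. intros HN A n GA. exists (lim N HN A n). apply baire_point; auto. Qed.

Lemma not_meager_Bas A n : Gspace A -> ~ rel_meager (Bas A n).
Proof.
  intros GA [N [HN Hc]]. destruct (baire N (fun k => ND_rel _ (HN k)) A n GA) as [C [HC Hno]].
  destruct (Hc C (proj1 HC) HC) as [k Hk]. apply (Hno k Hk).
Qed.

Fixpoint dec (l c : nat) : nat -> nat :=
  match l with
  | 0 => fun _ => 0
  | S l' => fun i => match i with 0 => fst (of_nat c) | S i' => dec l' (snd (of_nat c)) i' end
  end.
Fixpoint enc (l : nat) (f : nat -> nat) : nat :=
  match l with 0 => 0 | S l' => to_nat (f 0, enc l' (fun i => f (S i))) end.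
Lemma dec_enc l : forall f i, i < l -> dec l (enc l f) i = f i.
Proof.
  induction l; intros f i Hi; [lia|]. destruct i; cbn [dec enc]; rewrite cancel_of_to; cbn [fst snd]; auto.
  rewrite IHl; auto. lia.
Qed.
Definition tab (k c : nat) : table := fun i j => dec k (dec k c i) j.
Definition tcode (k : nat) (B : table) : nat := enc k (fun i => enc k (B i)).
Lemma tab_code k B : agree k (tab k (tcode k B)) B.
Proof. intros i j Hi Hj. unfold tab, tcode. rewrite dec_enc by auto. rewrite dec_enc; auto. Qed.

Definition O (c : nat) : table -> Prop :=
  fun C => Gspace C /\ agree (fst (of_nat c)) (tab (fst (of_nat c)) (snd (of_nat c))) C.
Lemma O_code k B C : O (to_nat (k, tcode k B)) C <-> Bas B k C.
Proof.
  unfold O, Bas. rewrite cancel_of_to. cbn [fst snd]. pose proof (tab_code k B).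
  split; intros [G H1]; split; auto; eapply agree_trans; eauto using agree_sym.
Qed.

Lemma banach (Y : table -> Prop) A0 n0 :
  (forall A n, Gspace A -> subs (Bas A n) (Bas A0 n0) ->
     exists B k, Gspace B /\ subs (Bas B k) (Bas A n) /\ rel_meager (fun C => Y C /\ Bas B k C)) ->
  rel_meager (fun C => Y C /\ Bas A0 n0 C).
Proof.
  intro H.
  set (goodc := fun c => (exists B, O c B) /\ subs (O c) (Bas A0 n0) /\ rel_meager (fun C => Y C /\ O c C)).
  set (Dset := fun C => exists c, goodc c /\ O c C).
  apply meager_mono with (Z := fun C => (exists c, goodc c /\ Y C /\ O c C) \/ (Bas A0 n0 C /\ ~ Dset C)).
  { intros C GC [YC VC]. destruct (classic (Dset C)) as [[c [Hc Oc]]|nD].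
    - left. exists c. auto. - right. auto. }
  apply meager_union.
  - apply meager_cunion. intro c. destruct (classic (goodc c)) as [Hg|Hng].
    + eapply meager_mono; [|exact (proj2 (proj2 Hg))]. intros C _ [_ [YC OC]]. auto.
    + apply meager_empty. intros C _ [Hg _]. auto.
  - apply meager_ND. intros A n GA. destruct (classic (agree n0 A0 A)) as [Hag|Hnag].
    + assert (Hs : subs (Bas A (max n n0)) (Bas A0 n0)) by (apply Bas_sub; [lia|auto]).
      destruct (H A (max n n0) GA Hs) as [B [k [GB [HBs HM]]]].
      exists B, k. split; auto. split.
      * intros C HC. apply (Bas_sub A n A (max n n0)); [lia| intros i j _ _; auto|]. auto.
      * intros C HC [_ HnD]. apply HnD. exists (to_nat (k, tcode k B)). split.
        -- split; [exists B; apply O_code; split; auto; intros i j _ _; auto|]. split.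
           ++ intros D HD. apply Hs, HBs, O_code, HD.
           ++ eapply meager_mono; [|exact HM]. intros D _ [YD OD]. split; auto. apply O_code; auto.
        -- apply O_code; auto.
    + exists A, (max n n0). split; auto. split.
      * apply Bas_sub; [lia| intros i j _ _; auto].
      * intros C [GC HC] [[_ HC0] _]. apply Hnag. eapply agree_trans; [exact HC0|].
        apply agree_sym. eapply agree_mono; [|exact HC]. lia.
Qed.

Definition good (X : table -> Prop) : Prop :=
  forall A n, Gspace A -> exists B k, Gspace B /\ subs (Bas B k) (Bas A n) /\
    (rel_meager (fun C => X C /\ Bas B k C) \/ rel_meager (fun C => ~ X C /\ Bas B k C)).

Lemma good_ext X Y : good X -> (forall C, Gspace C -> (X C <-> Y C)) -> good Y.
Proof.
  intros H E A n GA. destruct (H A n GA) as [B [k [GB [Hs [M|M]]]]]; exists B, k; split; auto; split; auto.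
  - left. eapply meager_mono; [|exact M]. intros C GC [YC BC]. split; auto. apply E; auto.
  - right. eapply meager_mono; [|exact M]. intros C GC [YC BC]. split; auto. rewrite E; auto.
Qed.

Lemma good_not X : good X -> good (fun C => ~ X C).
Proof.
  intros H A n GA. destruct (H A n GA) as [B [k [GB [Hs [M|M]]]]]; exists B, k; split; auto; split; auto.
  - right. eapply meager_mono; [|exact M]. intros C GC [YC BC]. split; auto. apply NNPP; auto.
Qed.

Lemma Bas_refl B k : Gspace B -> Bas B k B.
Proof. split; auto. intros i j _ _; auto. Qed.

Lemma good_and X Y : good X -> good Y -> good (fun C => X C /\ Y C).
Proof.
  intros HX HY A n GA. destruct (HX A n GA) as [B [k [GB [Hs MX]]]].
  destruct (HY B k GB) as [B' [k' [GB' [Hs' MY]]]].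
  exists B', k'. split; auto. split; [intros C HC; auto|].
  destruct MX as [M|M].
  - left. eapply meager_mono; [|exact M]. intros C GC [[XC _] BC]. auto.
  - destruct MY as [M'|M'].
    + left. eapply meager_mono; [|exact M']. intros C GC [[_ YC] BC]. auto.
    + right. eapply meager_mono; [|exact (meager_union _ _ M M')].
      intros C GC [nXY BC]. destruct (classic (X C)) as [XC|nXC].
      * right. split; auto.
      * left. split; auto.
Qed.

Lemma good_ex (X : nat -> table -> Prop) : (forall v, good (X v)) -> good (fun C => exists v, X v C).
Proof.
  intros H A n GA.
  destruct (classic (exists v B k, Gspace B /\ subs (Bas B k) (Bas A n) /\
              rel_meager (fun C => ~ X v C /\ Bas B k C))) as [[v [B [k [GB [Hs M]]]]]|Hno].
  - exists B, k. split; auto. split; auto. right. eapply meager_mono; [|exact M].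
    intros C GC [nE BC]. split; auto. intro Hx. apply nE. eauto.
  - exists A, n. split; auto. split; [intros C HC; auto|]. left.
    eapply meager_mono; [|apply (meager_cunion (fun v C => X v C /\ Bas A n C))].
    + intros C GC [[v XC] BC]. exists v. auto.
    + intro v. apply banach. intros A' n' GA' Hs'.
      destruct (H v A' n' GA') as [B [k [GB [Hs [M|M]]]]].
      * exists B, k. auto.
      * exfalso. apply Hno. exists v, B, k. split; auto. split; auto. intros C HC. auto.
Qed.

Lemma eval_local t e A : exists m, forall C, agree m A C -> eval C e t = eval A e t.
Proof.
  induction t as [v| |a IHa b IHb].
  - exists 0. auto. - exists 0. auto.
  - destruct IHa as [ma Ha], IHb as [mb Hb].
    exists (max ma (max mb (max (S (eval A e a)) (S (eval A e b))))). intros C HC. simpl.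
    rewrite Ha, Hb by (eapply agree_mono; [|exact HC]; lia).
    symmetry. apply HC; lia.
Qed.

Lemma good_sat f : forall e, good (fun C => sat C e f).
Proof.
  induction f as [t s| |g IH|g IHg h IHh|g IHg h IHh|g IHg h IHh|x g IH|x g IH]; intro e; simpl.
  - intros A n GA. destruct (eval_local t e A) as [m1 H1]. destruct (eval_local s e A) as [m2 H2].
    exists A, (max n (max m1 m2)). split; auto. split; [apply Bas_sub; [lia|intros i j _ _; auto]|].
    destruct (classic (eval A e t = eval A e s)) as [E|E].
    + right. apply meager_empty. intros C GC [nE [_ HC]]. apply nE.
      rewrite H1, H2 by (eapply agree_mono; [|exact HC]; lia). auto.
    + left. apply meager_empty. intros C GC [nE [_ HC]]. apply E.
      rewrite H1, H2 in nE by (eapply agree_mono; [|exact HC]; lia). auto.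
  - intros A n GA. exists A, n. split; auto. split; [intros C HC; auto|]. left. apply meager_empty. intros C _ [[] _].
  - apply good_not. auto.
  - apply good_and; auto.
  - eapply good_ext; [apply good_not, (good_and _ _ (good_not _ (IHg e)) (good_not _ (IHh e)))|].
    intros C _. tauto.
  - eapply good_ext; [apply good_not, (good_and _ _ (IHg e) (good_not _ (IHh e)))|].
    intros C _. tauto.
  - eapply good_ext; [apply good_not, (good_ex (fun v C => ~ sat C (upd e x v) g)); intro v; apply good_not, IH|].
    intros C _. split.
    + intros H v. apply NNPP. intros Hn. apply H. eauto.
    + intros H [v Hv]. apply Hv, H.
  - apply (good_ex (fun v C => sat C (upd e x v) g)). intro v. apply IH.
Qed.

Definition act (p p' : nat -> nat) (C : table) : table := fun x y => p (C (p' x) (p' y)).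
Definition bij (p p' : nat -> nat) : Prop := (forall x, p (p' x) = x) /\ (forall x, p' (p x) = x) /\ p 0 = 0.

Lemma bij_sym p p' : bij p p' -> bij p' p.
Proof. intros [H1 [H2 H3]]. split; auto. split; auto. rewrite <- H3 at 1. auto. Qed.

Lemma act_G p p' C : bij p p' -> Gspace C -> Gspace (act p p' C).
Proof.
  intros Hb GC. pose proof (bij_sym _ _ Hb) as [_ [_ H0']]. destruct Hb as [H1 [H2 H0]].
  destruct GC as [Ha [Hid Hinv]]. unfold act. split; [|split].
  - intros x y z. rewrite !H2. f_equal. apply Ha.
  - intro x. rewrite H0'. rewrite (proj1 (Hid _)), (proj2 (Hid _)). auto.
  - intro x. destruct (Hinv (p' x)) as [y [E1 E2]]. exists (p y). rewrite H2, E1, E2. auto.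
Qed.

Lemma act_inv p p' C : (forall x, p (p' x) = x) -> act p p' (act p' p C) = C.
Proof.
  intro H. apply functional_extensionality; intro x; apply functional_extensionality; intro y.
  unfold act. rewrite !H. auto.
Qed.

Fixpoint bnd (f : nat -> nat) (n : nat) : nat :=
  match n with 0 => 0 | S n' => max (S (f n')) (bnd f n') end.
Lemma bnd_spec f n i : i < n -> f i < bnd f n.
Proof. induction n; intro H; cbn [bnd]; [lia|]. destruct (Nat.eq_dec i n) as [E|E]; [subst; lia|]. assert (i < n) by lia. specialize (IHn H0). lia. Qed.

Lemma act_cont p p' n : exists m, forall C C', agree m C C' -> agree n (act p p' C) (act p p' C').
Proof.
  exists (bnd p' n). intros C C' H x y Hx Hy. unfold act. f_equal. apply H; apply bnd_spec; auto.
Qed.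

Lemma eval_act p p' C t : forall e e', bij p p' -> (forall v, e' v = p (e v)) ->
  eval (act p p' C) e' t = p (eval C e t).
Proof.
  intros e e' [H1 [H2 H0]] He. induction t; simpl; auto.
  rewrite IHt1, IHt2. unfold act. rewrite !H2. auto.
Qed.

Lemma sat_act p p' C f : forall e e', bij p p' -> (forall v, e' v = p (e v)) ->
  (sat (act p p' C) e' f <-> sat C e f).
Proof.
  induction f as [t s| |g IH|g IHg h IHh|g IHg h IHh|g IHg h IHh|x g IH|x g IH]; intros e e' Hb He; simpl.
  - rewrite !(eval_act p p' C _ e e') by auto. destruct Hb as [H1 [H2 H0]].
    split; intro E; [|congruence]. rewrite <- (H2 (eval C e t)), E, H2. auto.
  - tauto.
  - rewrite (IH e e'); tauto.
  - rewrite (IHg e e'), (IHh e e'); tauto.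
  - rewrite (IHg e e'), (IHh e e'); tauto.
  - rewrite (IHg e e'), (IHh e e'); tauto.
  - destruct Hb as [H1 [H2 H0]] eqn:Hbb. split.
    + intros H v. apply (IH (upd e x v) (upd e' x (p v))); auto.
      intro w. unfold upd. destruct (w =? x); auto.
    + intros H v. rewrite <- (H1 v). apply (IH (upd e x (p' v))); auto.
      intro w. unfold upd. destruct (w =? x); auto.
  - destruct Hb as [H1 [H2 H0]] eqn:Hbb. split.
    + intros [v H]. exists (p' v). rewrite <- (H1 v) in H. apply (IH (upd e x (p' v)) (upd e' x (p (p' v)))); auto.
      intro w. unfold upd. destruct (w =? x); auto.
    + intros [v H]. exists (p v). apply (IH (upd e x v)); auto.
      intro w. unfold upd. destruct (w =? x); auto.
Qed.

Lemma ND_pull p p' N : bij p p' -> ND N -> ND (fun C => N (act p p' C)).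
Proof.
  intros Hb HN A n GA. pose proof (bij_sym _ _ Hb) as Hb'.
  destruct (act_cont p' p n) as [n2 Hc2].
  destruct (HN (act p p' A) n2 (act_G _ _ _ Hb GA)) as [E [r [GE [Hs Hav]]]].
  destruct (act_cont p p' r) as [r2 Hc].
  exists (act p' p E), r2. split; [apply act_G; auto|]. split.
  - intros C [GC HC]. split; auto. specialize (Hc _ _ HC). rewrite act_inv in Hc by apply Hb.
    destruct (Hs (act p p' C)) as [_ HC2]; [split; auto; apply act_G; auto|].
    specialize (Hc2 _ _ HC2). rewrite !act_inv in Hc2 by apply Hb'. auto.
  - intros C [GC HC]. apply Hav. split; [apply act_G; auto|].
    specialize (Hc _ _ HC). rewrite act_inv in Hc by apply Hb. auto.
Qed.

Lemma meager_pull p p' Y : bij p p' -> rel_meager Y -> rel_meager (fun C => Y (act p p' C)).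
Proof.
  intros Hb [N [HN Hc]]. exists (fun k C => N k (act p p' C)). split.
  - intro k. apply rel_ND, ND_pull, ND_rel; auto.
  - intros C GC YC. apply Hc; auto. apply act_G; auto.
Qed.

Definition P (T1 T2 : table) (h : nat -> nat * nat) (q : nat * nat -> nat) : table :=
  fun x y => q (T1 (fst (h x)) (fst (h y)), T2 (snd (h x)) (snd (h y))).

Lemma P_G T1 T2 h q : (forall u, h (q u) = u) -> (forall x, q (h x) = x) -> h 0 = (0,0) ->
  Gspace T1 -> Gspace T2 -> Gspace (P T1 T2 h q).
Proof.
  intros Hhq Hqh H0 [A1 [I1 V1]] [A2 [I2 V2]]. unfold P. split; [|split].
  - intros x y z. rewrite !Hhq. simpl. rewrite A1, A2. auto.
  - intro x. rewrite H0. simpl. rewrite (proj1 (I1 _)), (proj1 (I2 _)), (proj2 (I1 _)), (proj2 (I2 _)).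
    rewrite <- surjective_pairing. auto.
  - intro x. destruct (V1 (fst (h x))) as [a [Ea Fa]]. destruct (V2 (snd (h x))) as [b [Eb Fb]].
    exists (q (a, b)). rewrite !Hhq. simpl. rewrite Ea, Fa, Eb, Fb.
    rewrite <- H0, Hqh. auto.
Qed.

Lemma P_act T1 T2 h q g r : (forall u, h (q u) = u) ->
  forall x y, act (fun x => r (h x)) (fun x => q (g x)) (P T1 T2 h q) x y = P T1 T2 g r x y.
Proof. intros Hhq x y. unfold act, P. rewrite !Hhq. auto. Qed.

Definition hm (m i : nat) : nat * nat :=
  if i <? m then (0, i) else
  let (a, j) := of_nat (i - m) in if a =? 0 then (0, j + m) else (a, j).
Definition qm (m : nat) (u : nat * nat) : nat :=
  let (a, j) := u in
  if a =? 0 then (if j <? m then j else m + to_nat (0, j - m)) else m + to_nat (a, j).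

Lemma hq m u : hm m (qm m u) = u.
Proof.
  destruct u as [a j]. unfold qm, hm. destruct (a =? 0) eqn:Ea.
  - apply Nat.eqb_eq in Ea; subst. destruct (j <? m) eqn:Ej.
    + rewrite Ej. auto.
    + apply Nat.ltb_ge in Ej. replace (m + to_nat (0, j - m) <? m) with false by (symmetry; apply Nat.ltb_ge; lia).
      replace (m + to_nat (0, j - m) - m) with (to_nat (0, j - m)) by lia. rewrite cancel_of_to. simpl. f_equal. lia.
  - replace (m + to_nat (a, j) <? m) with false by (symmetry; apply Nat.ltb_ge; lia).
    replace (m + to_nat (a, j) - m) with (to_nat (a, j)) by lia. rewrite cancel_of_to. rewrite Ea. auto.
Qed.

Lemma qh m i : qm m (hm m i) = i.
Proof.
  unfold hm. destruct (i <? m) eqn:Ei.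
  - unfold qm. cbn [Nat.eqb]. rewrite Ei. auto.
  - apply Nat.ltb_ge in Ei. destruct (of_nat (i - m)) as [a j] eqn:Eo.
    assert (Et : to_nat (a, j) = i - m) by (rewrite <- Eo; apply cancel_to_of).
    destruct (a =? 0) eqn:Ea.
    + apply Nat.eqb_eq in Ea; subst. unfold qm. cbn [Nat.eqb].
      replace (j + m <? m) with false by (symmetry; apply Nat.ltb_ge; lia).
      replace (j + m - m) with j by lia. lia.
    + unfold qm. rewrite Ea. lia.
Qed.

Lemma hm_small m i : i < m -> hm m i = (0, i).
Proof. intro H. unfold hm. apply Nat.ltb_lt in H. rewrite H. auto. Qed.
Lemma qm_small m j : j < m -> qm m (0, j) = j.
Proof. intro H. unfold qm. simpl. apply Nat.ltb_lt in H. rewrite H. auto. Qed.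

Definition sw (u : nat * nat) : nat * nat := (snd u, fst u).

Definition tbnd (T : table) (k : nat) : nat := bnd (fun i => bnd (T i) k) k.
Lemma tbnd_spec T k i j : i < k -> j < k -> T i j < tbnd T k.
Proof.
  intros Hi Hj. unfold tbnd. pose proof (bnd_spec (T i) k j Hj). pose proof (bnd_spec (fun i => bnd (T i) k) k i Hi).
  simpl in *. lia.
Qed.

Lemma homog B k B' k' : Gspace B -> Gspace B' ->
  exists p p' D, bij p p' /\ Gspace D /\ agree k' B' D /\ agree k B (act p p' D).
Proof.
  intros GB GB'.
  set (m' := S (k' + tbnd B' k')). set (m := S (k + tbnd B k)).
  set (g := fun i => sw (hm m i)). set (r := fun u => qm m (sw u)).
  assert (swsw : forall u, sw (sw u) = u) by (intros [a b]; reflexivity).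
  assert (Hgr : forall u, g (r u) = u). { intro u. unfold g, r. rewrite hq. apply swsw. }
  assert (Hrg : forall x, r (g x) = x). { intro x. unfold g, r. rewrite swsw. apply qh. }
  exists (fun x => r (hm m' x)), (fun x => qm m' (g x)), (P B B' (hm m') (qm m')).
  assert (B00 : B 0 0 = 0) by (apply (proj1 (proj2 GB))).
  assert (B'00 : B' 0 0 = 0) by (apply (proj1 (proj2 GB'))).
  split; [|split; [|split]].
  - split; [|split].
    + intro x. rewrite hq. auto.
    + intro x. rewrite Hgr. apply qh.
    + rewrite hm_small by (unfold m'; lia). unfold r, sw. cbn [fst snd sw]. apply qm_small. unfold m. lia.
  - apply P_G; auto using hq, qh; apply hm_small; unfold m'; lia.
  - intros i j Hi Hj. unfold P. rewrite !hm_small by (unfold m'; lia). cbn [fst snd sw]. rewrite B00.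
    symmetry. apply qm_small. pose proof (tbnd_spec B' k' i j Hi Hj). unfold m'. lia.
  - intros i j Hi Hj. rewrite P_act by apply hq. unfold P, g, r.
    rewrite !hm_small by (unfold m; lia). cbn [fst snd sw]. rewrite B'00. symmetry. apply qm_small.
    pose proof (tbnd_spec B k i j Hi Hj). unfold m. lia.
Qed.

Fixpoint encT (t : term) : nat :=
  match t with
  | TVar n => to_nat (0, n)
  | TOne => to_nat (1, 0)
  | TMul a b => to_nat (2, to_nat (encT a, encT b))
  end.
Fixpoint encF (f : formula) : nat :=
  match f with
  | FEq a b => to_nat (0, to_nat (encT a, encT b))
  | FFalse => to_nat (1, 0)
  | FNot g => to_nat (2, encF g)
  | FAnd g h => to_nat (3, to_nat (encF g, encF h))
  | FOr g h => to_nat (4, to_nat (encF g, encF h))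
  | FImp g h => to_nat (5, to_nat (encF g, encF h))
  | FAll n g => to_nat (6, to_nat (n, encF g))
  | FEx n g => to_nat (7, to_nat (n, encF g))
  end.
Lemma to_nat_inj p q : to_nat p = to_nat q -> p = q.
Proof. intro H. rewrite <- (cancel_of_to p), <- (cancel_of_to q), H. auto. Qed.
Ltac inj_tac := repeat match goal with
  | H : to_nat _ = to_nat _ |- _ => apply to_nat_inj in H
  | H : (_, _) = (_, _) |- _ => apply pair_equal_spec in H; destruct H
  | H : S _ = S _ |- _ => apply Nat.succ_inj in H
  | H : 0 = S _ |- _ => discriminate H
  | H : S _ = 0 |- _ => discriminate H
  end.
Lemma encT_inj t : forall s, encT t = encT s -> t = s.
Proof.
  induction t; destruct s; cbn [encT]; intro H; inj_tac; subst; f_equal; auto.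
Qed.
Lemma encF_inj f : forall g, encF f = encF g -> f = g.
Proof.
  induction f; destruct g; cbn [encF]; intro H; inj_tac; subst; f_equal; auto using encT_inj.
Qed.

Definition Xs (f : formula) : table -> Prop := fun C => sat C (fun _ => 0) f.

Lemma Xs_act p p' f C : bij p p' -> (Xs f (act p p' C) <-> Xs f C).
Proof. intro Hb. unfold Xs. apply sat_act; auto. intro v. symmetry. apply Hb. Qed.

Lemma locate Y A0 : Gspace A0 -> good Y -> ~ rel_meager Y ->
  exists B k, Gspace B /\ rel_meager (fun C => ~ Y C /\ Bas B k C).
Proof.
  intros G0 HY nM. apply NNPP; intro Hno. apply nM.
  apply meager_mono with (Z := fun C => Y C /\ Bas A0 0 C).
  { intros C GC YC. split; auto. split; auto. intros i j Hi; lia. }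
  apply banach. intros A n GA Hs. destruct (HY A n GA) as [B [k [GB [Hs' [M|M]]]]].
  - exists B, k. auto.
  - exfalso. apply Hno. exists B, k. auto.
Qed.

Lemma zero_one f : rel_meager (Xs f) \/ rel_meager (fun C => ~ Xs f C).
Proof.
  apply NNPP. intro H. apply not_or_and in H as [nM1 nM2].
  destruct (classic (exists A, Gspace A)) as [[A0 G0]|nE].
  2:{ apply nM1. apply meager_empty. intros C GC _. apply nE. eauto. }
  destruct (locate _ A0 G0 (good_sat f _) nM1) as [B [k [GB M1]]].
  destruct (locate _ A0 G0 (good_not _ (good_sat f _)) nM2) as [B' [k' [GB' M2]]].
  destruct (homog B k B' k' GB GB') as [p [p' [D [Hb [GD [H1 H2]]]]]].
  destruct (act_cont p p' k) as [m Hc].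
  apply (not_meager_Bas D (max m k') GD).
  apply meager_mono with (Z := fun C => (~ ~ Xs f C /\ Bas B' k' C) \/
        ((fun C => ~ Xs f C /\ Bas B k C) (act p p' C))).
  - intros C GC [_ HC]. destruct (classic (Xs f C)) as [XC|nXC].
    + left. split; auto. split; auto. eapply agree_trans; [exact H1|]. eapply agree_mono; [|exact HC]. lia.
    + right. split; [rewrite Xs_act; auto|]. split; [apply act_G; auto|].
      eapply agree_trans; [exact H2|]. apply Hc. eapply agree_mono; [|exact HC]. lia.
  - apply meager_union; auto. apply (meager_pull p p' (fun C => ~ Xs f C /\ Bas B k C)); auto.
Qed.

Theorem corollary5p9 :
  exists S : table -> Prop,
    comeager_in_G S /\
    (forall G H : table, S G -> Gspace H -> (elem_equiv G H <-> S H)).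
Proof.
  exists (fun H => Gspace H /\ forall f, sentence f -> rel_meager (fun C => ~ Xs f C) -> Xs f H).
  split.
  - split; [intros A [GA _]; auto|].
    apply meager_mono with (Z := fun C => exists c, exists f, encF f = c /\ sentence f /\
        rel_meager (fun C => ~ Xs f C) /\ ~ Xs f C).
    + intros C GC [_ nS]. apply NNPP; intro Hn. apply nS. split; auto.
      intros f Hf Mf. apply NNPP; intro nX. apply Hn. exists (encF f), f. auto.
    + apply meager_cunion. intro c.
      destruct (classic (exists f, encF f = c /\ sentence f /\ rel_meager (fun C => ~ Xs f C))) as
        [[f [Ef [_ Mf]]]|nE].
      * eapply meager_mono; [|exact Mf]. intros C _ [g [Eg [_ [_ nX]]]].
        rewrite <- Ef in Eg. apply encF_inj in Eg. subst. auto.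
      * apply meager_empty. intros C _ [g [Eg [Sg [Mg _]]]]. apply nE. eauto.
  - intros G H [GG SG] GH. split.
    + intro E. split; auto. intros f Hf Mf. apply (E f Hf). apply SG; auto.
    + intros [_ SH] f Hf. destruct (zero_one f) as [M|M].
      * assert (Hn : sentence (FNot f)) by exact Hf.
        assert (M' : rel_meager (fun C => ~ Xs (FNot f) C)).
        { eapply meager_mono; [|exact M]. intros C _ HC. unfold Xs in *. simpl in HC. apply NNPP; auto. }
        pose proof (SG (FNot f) Hn M') as A1. pose proof (SH (FNot f) Hn M') as A2.
        unfold Xs in A1, A2. simpl in A1, A2. tauto.
      * pose proof (SG f Hf M). pose proof (SH f Hf M). unfold Xs in *. tauto.
Qed.
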